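(* Consider the complex polynomial optimization problem $\inf\{f : g_j\ge0,\ j\in[m]\}$ and assume it is a quadratically constrained quadratic program, i.e. $\deg f\le2$ and $1\le\deg g_j\le2$ for all $j\in[m]$. Then the term-sparsity relaxation with $d=1$, $k=1$ and the dense first-order relaxation have the same optimal value: $\rho^{\mathrm{ts}}_{1,1}=\rho_1$.
   Context: Notation: $[n]=\{1,\dots,n\}$; $\mathbb N^n_t=\{\alpha\in\mathbb N^n:\sum_i\alpha_i\le t\}$. Let $\mathbf z=(z_1,\dots,z_n)$ be complex variables and $\bar{\mathbf z}$ their conjugates. A polynomial $p\in\mathbb C[\mathbf z,\bar{\mathbf z}]$ is written $p=\sum_{(\beta,\gamma)}p_{\beta,\gamma}\mathbf z^\beta\bar{\mathbf z}^\gamma$; its support is $\mathrm{supp}(p)=\{(\beta,\gamma)\in\mathbb N^n\times\mathbb N^n:p_{\beta,\gamma}\neq0\}$ and $\deg p=\max\{|\beta|+|\gamma|:(\beta,\gamma)\in\mathrm{supp}(p)\}$. $p$ is Hermitian if $p_{\beta,\gamma}=\overline{p_{\gamma,\beta}}$. For $(\beta,\gamma)\in\mathbb N^n\times\mathbb N^n$ and $\mathscr B\subseteq\mathbb N^n\times\mathbb N^n$, $(\beta,\gamma)+\mathscr B=\{(\beta+\beta',\gamma+\gamma'):(\beta',\gamma')\in\mathscr B\}$. The problem has Hermitian $f,g_1,\dots,g_m$; $d_j=\lceil\deg g_j/2\rceil$, $d_0=0$, $g_0=1$, $d_{\min}=\max\{\lceil\deg f/2\rceil,d_1,\dots,d_m\}$,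 and $\mathscr A=\mathrm{supp}(f)\cup\bigcup_{j=1}^m\mathrm{supp}(g_j)$. Moments: $\mathbf y=(y_{\beta,\gamma})$ complex with $y_{\beta,\gamma}=\overline{y_{\gamma,\beta}}$; $L_{\mathbf y}(p)=\sum p_{\beta,\gamma}y_{\beta,\gamma}$; for Hermitian $g$, $\mathbf M_t(g\mathbf y)$ is the Hermitian matrix indexed by $\mathbb N^n_t$ with $(\beta,\gamma)$ entry $\sum_{(\beta',\gamma')}g_{\beta',\gamma'}y_{\beta+\beta',\gamma+\gamma'}$, and $\mathbf M_t(\mathbf y)=\mathbf M_t(1\cdot\mathbf y)$. Dense relaxation $(Q_d)$, $d\ge d_{\min}$: minimize $L_{\mathbf y}(f)$ s.t. $\mathbf M_d(\mathbf y)\succeq0$, $\mathbf M_{d-d_j}(g_j\mathbf y)\succeq0$ ($j\in[m]$), $y_{\mathbf 0,\mathbf 0}=1$; optimal value $\rho_d$. Graphs and matrices: graphs are undirected and simple; for a graph $G$ on an ordered node set $V$ with $|V|=r$, $B_G$ is its adjacency matrix with ones on the diagonal, $\circ$ is the entrywise product, $\mathbf H^r_+$ is the cone of $r\times r$ Hermitian PSD matrices indexed by $V$, $\Pi_G(Q)$ keeps the entries $(\beta,\gamma)$ of $Q$ with $\beta=\gamma$ or $\{\beta,\gamma\}\in E(G)$ and sets the others to $0$, and $\Pi_G(\mathbf H^r_+)=\{\Pi_G(Q):Q\in\mathbf H^r_+\}$. A chordal extension $\overline G$ of $G$ is a chordal graph on the same nodes containing $G$; a fixed rule $G\mapsto\overline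 G$ is used, satisfying $G\subseteq H\Rightarrow\overline G\subseteq\overline H$ (subgraph inclusion). Term sparsity: for a graph $G$ with nodes in $\mathbb N^n$ and Hermitian $g$, $\mathrm{supp}_g(G)=\{(\beta+\beta',\gamma+\gamma'):\ (\beta=\gamma\in V(G)\text{ or }\{\beta,\gamma\}\in E(G)),\ (\beta',\gamma')\in\mathrm{supp}(g)\}$. Fix $d\ge d_{\min}$. The tsp graph $G^{\mathrm{tsp}}_d$ has nodes $\mathbb N^n_d$ and edges $\{\beta,\gamma\}$, $\beta\ne\gamma$, with $(\beta,\gamma)\in\mathscr A$. Put $G^{(0)}_{d,0}=G^{\mathrm{tsp}}_d$ and, for $j\in[m]$, let $G^{(0)}_{d,j}$ be the graph on $\mathbb N^n_{d-d_j}$ without edges. For $k\ge1$ and $j\in\{0\}\cup[m]$, $F^{(k)}_{d,j}$ is the graph on $\mathbb N^n_{d-d_j}$ whose edges are the $\{\beta,\gamma\}$, $\beta\ne\gamma$, with $((\beta,\gamma)+\mathrm{supp}(g_j))\cap\bigcup_{i=0}^m\mathrm{supp}_{g_i}(G^{(k-1)}_{d,i})\neq\emptyset$, and $G^{(k)}_{d,j}=\overline{F^{(k)}_{d,j}}$. With $r_j=\binom{n+d-d_j}{d-d_j}$, the relaxation $(Q^{\mathrm{ts}}_{d,k})$ is: minimize $L_{\mathbf y}(f)$ s.t. $B_{G^{(k)}_{d,j}}\circ\mathbf M_{d-d_j}(g_j\mathbf y)\in\Pi_{G^{(k)}_{d,j}}(\mathbf H^{r_j}_+)$ for all $j\in\{0\}\cup[m]$,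 and $y_{\mathbf 0,\mathbf 0}=1$; optimal value $\rho^{\mathrm{ts}}_{d,k}$. *)

(* Defs.v *)
From HB Require Import structures.
From mathcomp Require Import all_boot all_order all_algebra.
From mathcomp Require Import finmap.
From mathcomp Require Import complex.
From mathcomp Require Import boolp classical_sets reals constructive_ereal ereal.

Set Implicit Arguments.
Unset Strict Implicit.
Unset Printing Implicit Defensive.

Import Order.TTheory GRing.Theory Num.Theory.
Local Open Scope ring_scope.
Local Open Scope classical_set_scope.

Definition mon (n : nat) := {ffun 'I_n -> nat}.

Definition mdeg n (a : mon n) : nat := (\sum_(i < n) a i)%N.
Definition madd n (a b : mon n) : mon n := [ffun i => (a i + b i)%N].
Definition mzero n : mon n := [ffun _ => 0%N].

Definition Nnt (n t : nat) :=
  {a : {ffun 'I_n -> 'I_t.+1} | (\sum_(i < n) (a i : nat) <= t)%N}.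

Definition monof n t (a : Nnt n t) : mon n := [ffun i => nat_of_ord (val a i)].

Section Poly.
Variable R : realType.
Variable n : nat.

(* Polynomials p in C[z, zbar]: finitely supported coefficient functions
   (beta, gamma) |-> p_{beta,gamma}, C = R[i]. *)
Definition cpoly := {fsfun (mon n * mon n) -> R[i] with 0}.

Definition pdeg (p : cpoly) : nat :=
  (\max_(x <- finsupp p) (mdeg x.1 + mdeg x.2))%N.

Definition herm_poly (p : cpoly) : Prop :=
  forall b c : mon n, p (b, c) = (p (c, b))^*.

Definition cpoly1 : cpoly :=
  [fsfun x in [fset (mzero n, mzero n)]%fset => (1 : R[i])].

Definition moments := mon n -> mon n -> R[i].

Definition hermitian_moments (y : moments) : Prop :=
  forall b c : mon n, y b c = (y c b)^*.

Definition Ly (y : moments) (p : cpoly) : R[i] :=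
  \sum_(x <- finsupp p) p x * y x.1 x.2.

Definition Mloc (t : nat) (g : cpoly) (y : moments) : Nnt n t -> Nnt n t -> R[i] :=
  fun a b => \sum_(x <- finsupp g) g x * y (madd (monof a) x.1) (madd (monof b) x.2).

Definition Mmom (t : nat) (y : moments) := @Mloc t cpoly1 y.

End Poly.
Arguments Mloc {R n} t g y.
Arguments Mmom {R n} t y.

Section Matrices.
Variable R : realType.
Variable V : finType.

Definition psd (Q : V -> V -> R[i]) : Prop :=
  (forall a b, Q a b = (Q b a)^*) /\
  forall v : V -> R[i], 0 <= \sum_(a : V) \sum_(b : V) (v a)^* * Q a b * v b.

Definition simple_graph (E : rel V) : Prop := irreflexive E /\ symmetric E.

Definition subgraph (E F : rel V) : Prop := forall x y, E x y -> F x y.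

Definition chordal (E : rel V) : Prop :=
  forall s : seq V, uniq s -> (4 <= size s)%N -> cycle E s ->
    exists x y, [/\ x \in s, y \in s, E x y, next s x != y & prev s x != y].

Definition adjB (E : rel V) : V -> V -> R[i] :=
  fun a b => if (a == b) || E a b then 1 else 0.

Definition hadamard (M N : V -> V -> R[i]) : V -> V -> R[i] :=
  fun a b => M a b * N a b.

Definition PiG (E : rel V) (Q : V -> V -> R[i]) : V -> V -> R[i] :=
  fun a b => if (a == b) || E a b then Q a b else 0.

Definition in_PiG_psd (E : rel V) (M : V -> V -> R[i]) : Prop :=
  exists Q, psd Q /\ PiG E Q = M.

End Matrices.

Definition chordal_ext_rule (ext : forall V : finType, rel V -> rel V) : Prop :=
  (forall (V : finType) (E : rel V), simple_graph E ->
      [/\ simple_graph (ext V E), chordal (ext V E) & subgraph E (ext V E)]) /\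
  (forall (V : finType) (E F : rel V), simple_graph E -> simple_graph F ->
      subgraph E F -> subgraph (ext V E) (ext V F)).

Section Relaxations.
Variable R : realType.
Variables n m : nat.
Variable f : cpoly R n.
Variable g : 'I_m -> cpoly R n.

(* g_j for j in {0} u [m], encoded by 'I_m.+1 with 0 |-> g_0 = 1 and
   lift ord0 j |-> g_j *)
Definition gext (j : 'I_m.+1) : cpoly R n :=
  match unlift ord0 j with Some j' => g j' | None => cpoly1 R n end.

Definition dg (j : 'I_m) : nat := uphalf (pdeg (g j)).
Definition dext (j : 'I_m.+1) : nat := uphalf (pdeg (gext j)).

Definition dmin : nat := maxn (uphalf (pdeg f)) (\max_(j < m) dg j).

Definition Asupp (x : mon n * mon n) : bool :=
  (x \in finsupp f) || [exists j, x \in finsupp (g j)].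

Definition dense_feasible (d : nat) (y : moments R n) : Prop :=
  [/\ hermitian_moments y,
      psd (Mmom d y),
      (forall j : 'I_m, psd (Mloc (d - dg j)%N (g j) y))
    & y (mzero n) (mzero n) = 1].

Definition rho (d : nat) : \bar R :=
  ereal_inf [set ((@complex.Re R (Ly y f))%:E) | y in dense_feasible d].

Definition suppG (t : nat) (h : cpoly R n) (E : rel (Nnt n t)) (x : mon n * mon n)
  : Prop :=
  exists u v : Nnt n t, ((u == v) || E u v) /\
    exists2 w, w \in finsupp h & x = (madd (monof u) w.1, madd (monof v) w.2).

Definition tsp_graph (t : nat) : rel (Nnt n t) :=
  fun u v => (u != v) &&
    (Asupp (monof u, monof v) || Asupp (monof v, monof u)).

Section TS.
Variable ext : forall V : finType, rel V -> rel V.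
Variable d : nat.

Definition graph_family := forall j : 'I_m.+1, rel (Nnt n (d - dext j)%N).

Definition G0 : graph_family :=
  fun j => if j == ord0 then @tsp_graph (d - dext j)%N else (fun _ _ => false).

Definition Fnext (Gprev : graph_family) : graph_family :=
  fun j u v =>
    let hit (a b : Nnt n (d - dext j)%N) :=
      exists2 w, w \in finsupp (gext j) &
        exists i : 'I_m.+1, suppG (gext i) (Gprev i)
                              (madd (monof a) w.1, madd (monof b) w.2) in
    (u != v) && `[< hit u v \/ hit v u >].

Fixpoint Gts (k : nat) : graph_family :=
  match k with
  | 0 => G0
  | k'.+1 => fun j => @ext _ (@Fnext (Gts k') j)
  end.

Definition ts_feasible (k : nat) (y : moments R n) : Prop :=
  [/\ hermitian_moments y,
      (forall j : 'I_m.+1,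
         in_PiG_psd (@Gts k j)
           (hadamard (adjB R (@Gts k j)) (Mloc (d - dext j)%N (gext j) y)))
    & y (mzero n) (mzero n) = 1].

Definition rho_ts (k : nat) : \bar R :=
  ereal_inf [set ((@complex.Re R (Ly y f))%:E) | y in ts_feasible k].

End TS.
End Relaxations.

(* Main.v *)
Require Import Defs.
From HB Require Import structures.
From mathcomp Require Import all_boot all_order all_algebra.
From mathcomp Require Import finmap.
From mathcomp Require Import complex.
From mathcomp Require Import boolp classical_sets reals constructive_ereal ereal.

Set Implicit Arguments.
Unset Strict Implicit.
Unset Printing Implicit Defensive.
Import Order.TTheory GRing.Theory Num.Theory.
Local Open Scope ring_scope.
Local Open Scope classical_set_scope.

Lemma madd0r n (a : mon n) : madd (mzero n) a = a.
Proof. by apply/ffunP => i; rewrite !ffunE. Qed.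

Lemma maddr0 n (a : mon n) : madd a (mzero n) = a.
Proof. by apply/ffunP => i; rewrite !ffunE addn0. Qed.

Lemma monof_inj n t : injective (@monof n t).
Proof.
move=> a b H; apply/val_inj/ffunP => i; apply/val_inj.
by have := congr1 (fun F : mon n => F i) H; rewrite !ffunE.
Qed.

Lemma monof0 n t (a : Nnt n t) : t = 0%N -> monof a = mzero n.
Proof.
move=> Ht; subst t; apply/ffunP => i; rewrite !ffunE.
by case: (val a i) => -[].
Qed.

Lemma Nnt0_uniq n t (a b : Nnt n t) : t = 0%N -> a = b.
Proof. by move=> Ht; apply: monof_inj; rewrite !monof0. Qed.

Section S.
Variable R : realType.
Variable n : nat.

Lemma finsupp_cpoly1 : finsupp (cpoly1 R n) = [fset (mzero n, mzero n)]%fset.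
Proof.
apply/fsetP => x; rewrite mem_finsupp /cpoly1 fsfunE !inE.
by case: (x == _); rewrite ?oner_neq0 ?eqxx. 
Qed.

Lemma cpoly1_00 : cpoly1 R n (mzero n, mzero n) = 1.
Proof. by rewrite /cpoly1 fsfunE inE eqxx. Qed.

Lemma Mloc_cpoly1 t (y : moments R n) (u v : Nnt n t) :
  Mloc t (cpoly1 R n) y u v = y (monof u) (monof v).
Proof. by rewrite /Mloc finsupp_cpoly1 big_seq_fset1 cpoly1_00 mul1r /= !maddr0. Qed.

Lemma psd_ext (V : finType) (M N : V -> V -> R[i]) :
  (forall a b, M a b = N a b) -> psd M -> psd N.
Proof.
move=> E [H1 H2]; split => [a b|v]; first by rewrite -!E.
by under eq_bigr do under eq_bigr do rewrite -E; apply: H2.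
Qed.

Lemma psd_PiG (V : finType) (E : rel V) (M : V -> V -> R[i]) :
  psd M -> in_PiG_psd E (hadamard (adjB R E) M).
Proof.
move=> H; exists M; split => //; apply/funext => a; apply/funext => b.
by rewrite /PiG /hadamard /adjB; case: ifP; rewrite ?mul1r ?mul0r.
Qed.

Lemma PiG_entry (V : finType) (E : rel V) (M Q : V -> V -> R[i]) a b :
  PiG E Q = hadamard (adjB R E) M -> (a == b) || E a b -> Q a b = M a b.
Proof.
move=> H C; have := congr1 (fun F => F a b) H.
by rewrite /PiG /hadamard /adjB C mul1r.
Qed.

Lemma PiG_single t (E : rel (Nnt n t)) (M : Nnt n t -> Nnt n t -> R[i]) :
  t = 0%N -> in_PiG_psd E (hadamard (adjB R E) M) -> psd M.
Proof.
move=> Ht [Q [HQ HE]]; apply: psd_ext HQ => a b.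
rewrite (Nnt0_uniq a b Ht); apply: PiG_entry HE _; by rewrite eqxx.
Qed.


Lemma core t (E : rel (Nnt n t)) (h : cpoly R n) (A : pred (mon n * mon n))
    (y : moments R n) :
  t = 1%N -> h = cpoly1 R n -> hermitian_moments y ->
  y (mzero n) (mzero n) = 1 ->
  (forall u v : Nnt n t, u != v -> A (monof u, monof v) -> E u v) ->
  in_PiG_psd E (hadamard (adjB R E) (Mloc t h y)) ->
  exists y' : moments R n, [/\ hermitian_moments y', psd (Mmom 1 y'),
     y' (mzero n) (mzero n) = 1 & forall x, A x -> y' x.1 x.2 = y x.1 x.2].
Proof.
move=> Ht Hh Hy Hy0 HE [Q [HQ HPi]]; subst t h.
have QM : forall u v, (u == v) || E u v -> Q u v = y (monof u) (monof v).
  by move=> u v C; rewrite (PiG_entry HPi C) Mloc_cpoly1.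
pose y' : moments R n := fun b c =>
  match [pick u | monof u == b], [pick v | monof v == c] with
  | Some u, Some v => Q u v | _, _ => y b c end.
have y'E : forall u v, y' (monof u) (monof v) = Q u v.
  move=> u v; rewrite /y'.
  case: (@pickP (Nnt n 1)) => [u' /eqP/monof_inj ->|/(_ u)]; last by rewrite eqxx.
  case: (@pickP (Nnt n 1)) => [v' /eqP/monof_inj ->|/(_ v)]; last by rewrite eqxx.
  by [].
exists y'; split.
- move=> b c; rewrite /y'.
  case: (@pickP (Nnt n 1)) => [u Hu|Hu]; case: (@pickP (Nnt n 1)) => [v Hv|Hv] //; by rewrite HQ.1.
- by apply: psd_ext HQ => u v; rewrite /Mmom Mloc_cpoly1 y'E.
- rewrite /y'; case: (@pickP (Nnt n 1)) => [u /eqP Hu|//].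
  by rewrite QM ?eqxx // Hu.
- move=> [b c] Ax /=; rewrite /y'.
  case: (@pickP (Nnt n 1)) => [u /eqP Hu|//]; case: (@pickP (Nnt n 1)) => [v /eqP Hv|//].
  subst b c; apply: QM; case: eqP => //= /eqP uv; exact: HE.
Qed.

End S.

Theorem mainTheorem4 (R : realType) (n m : nat) (f : cpoly R n)
    (g : 'I_m -> cpoly R n) (ext : forall V : finType, rel V -> rel V) :
  chordal_ext_rule ext ->
  herm_poly f -> (forall j, herm_poly (g j)) ->
  (pdeg f <= 2)%N -> (forall j, 1 <= pdeg (g j) <= 2)%N ->
  rho_ts f g ext 1 1 = rho f g 1.
Proof.
move=> [Hext1 _] _ _ _ Hg.
have gext0 : gext g ord0 = cpoly1 R n by rewrite /gext unlift_none.
have gextl : forall j, gext g (lift ord0 j) = g j by move=> j; rewrite /gext liftK.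
have pdeg1 : pdeg (cpoly1 R n) = 0%N.
  rewrite /pdeg finsupp_cpoly1 big_seq_fset1 /= /mdeg.
  by rewrite big1 // => i _; rewrite ffunE.
have dg1 : forall j, dg g j = 1%N.
  move=> j; rewrite /dg; have /andP[h1 h2] := Hg j.
  by case: (pdeg (g j)) h1 h2 => [|[|[|k]]].
rewrite /rho_ts /rho; congr ereal_inf; apply/seteqP; split => _ [y Hy <-].
- case: Hy => Hh Hj H1.
  have Ht : (1 - dext g ord0 = 1)%N by rewrite /dext gext0 pdeg1.
  have Hs : simple_graph (@Fnext R n m g 1 (@G0 R n m f g 1) ord0).
    split; first by move=> u; rewrite /Fnext eqxx.
    move=> u v; rewrite /Fnext eq_sym; congr (_ && _); apply: asbool_equiv_eq; tauto.
  have [_ _ sub] := Hext1 _ _ Hs.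
  have Hedge : forall u v, u != v -> Asupp f g (monof u, monof v) ->
      @Gts R n m f g ext 1 1 ord0 u v.
    move=> u v uv A; apply: sub; rewrite /Fnext uv /=; apply/asboolP; left.
    exists (mzero n, mzero n); first by rewrite gext0 finsupp_cpoly1 inE.
    exists ord0; exists u, v; split.
      by rewrite /G0 /= /tsp_graph uv A /= orbT.
    exists (mzero n, mzero n); first by rewrite gext0 finsupp_cpoly1 inE.
    by [].
  have [y' [Hh' Hpsd' Hy0' Hagree]] :=
    core (A := Asupp f g) Ht gext0 Hh H1 Hedge (Hj ord0).
  exists y'; last first.
    congr (_%:E); congr complex.Re; rewrite /Ly; apply: eq_big_seq => x xs.
    by rewrite Hagree // /Asupp xs.
  split => // j.
  have Ht0 : (1 - dext g (lift ord0 j) = 0)%N.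
    by rewrite /dext gextl; have := dg1 j; rewrite /dg => ->.
  have := PiG_single Ht0 (Hj (lift ord0 j)); rewrite /dext gextl => P.
  apply: psd_ext P => a b; rewrite /Mloc; apply: eq_big_seq => x xs.
  have t0 : (1 - uphalf (pdeg (g j)) = 0)%N by have := dg1 j; rewrite /dg => ->.
  rewrite !(monof0 _ t0) !madd0r Hagree //.
  by rewrite /Asupp; apply/orP; right; apply/existsP; exists j.
- case: Hy => Hh Hpsd Hj H1; exists y => //; split => // j.
  case: (unliftP ord0 j) => [j'|] ->; apply: psd_PiG.
    by rewrite /dext gextl; exact: Hj j'.
  by rewrite /dext gext0 pdeg1; exact: Hpsd.
Qed.
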